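(* Consider $n$ projects with revenue functions $R_j:\{0,1,2\}\to\mathbb{R}$, $R_j(0)=0$ (i.e., $m=2$). Put $a_j=R_j(1)$, $b_j=R_j(2)-R_j(1)$, and split the projects into $A=\{j: a_j>b_j\}$ and $B=\{j: a_j\le b_j\}$. Let $f(k)$ be the maximum of $\sum_{j\in A}R_j(x_j)$ over $x_j\in\{0,1,2\}$ with $\sum_{j\in A}x_j=k$, and $g(k)$ the maximum of $\sum_{j\in B}R_j(x_j)$ over $x_j\in\{0,1,2\}$ with $\sum_{j\in B}x_j=k$. Index the projects of $B$ as $1,\dots,|B|$ in non-increasing order of $R_i(2)=a_i+b_i$. Then: (1) $f(k)$ equals the sum of the $k$ largest elements of the multiset $\{a_i: i\in A\}\cup\{b_i: i\in A\}$; (2) for $0\le k\le 2|B|$, $g(k)=\sum_{i=1}^{k/2}R_i(2)$ if $k$ is even, and if $k$ is odd, $$g(k)=\max\Bigl(g(k-1)+\max_{\frac{k+3}{2}\le i\le |B|}a_i,\ \ g(k+1)-\min_{1\le i\le \frac{k+1}{2}}b_i\Bigr),$$ where indices refer to projects of $B$ and a maximum over an empty range is $-\infty$.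
   Context: All quantities are as defined in the claim; $k$ ranges over $0\le k\le 2|A|$ for $f$ and $0\le k\le 2|B|$ for $g$. *)

(* Defs.v *)
From mathcomp Require Import all_boot all_order all_algebra.
Set Implicit Arguments. Unset Strict Implicit. Unset Printing Implicit Defensive.
Import Order.TTheory GRing.Theory Num.Theory.
Local Open Scope ring_scope.

Section Defs.
Variables (R : realFieldType) (n : nat).
(* rev j x = R_j(x); only x in {0,1,2} is ever used. *)
Variable rev : 'I_n -> nat -> R.

Definition aa (j : 'I_n) : R := rev j 1.
Definition bb (j : 'I_n) : R := rev j 2 - rev j 1.

Definition setA : {set 'I_n} := [set j | bb j < aa j].
Definition setB : {set 'I_n} := [set j | aa j <= bb j].

Definition maxopt (T : finType) (P : pred T) (F : T -> R) : option R :=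
  if [pick x | P x] is Some x0 then Some (\big[Num.max/F x0]_(x | P x) F x)
  else None.
Definition minopt (T : finType) (P : pred T) (F : T -> R) : option R :=
  if [pick x | P x] is Some x0 then Some (\big[Num.min/F x0]_(x | P x) F x)
  else None.

Definition optval (S : {set 'I_n}) (k : nat) : option R :=
  maxopt (fun x : {ffun 'I_n -> 'I_3} => (\sum_(j in S) (x j : nat))%N == k)
         (fun x => \sum_(j in S) rev j (x j)).

Definition fval k := optval setA k.
Definition gval k := optval setB k.

Definition topk_sum (k : nat) : R :=
  \sum_(v <- take k (sort (>=%R) ([seq aa j | j in setA] ++ [seq bb j | j in setA]))) v.
End Defs.

(* Main.v *)
Require Import Defs.
From mathcomp Require Import all_boot all_order all_algebra.
From mathcomp Require Import ring lra zify.
Set Implicit Arguments. Unset Strict Implicit. Unset Printing Implicit Defensive.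
Import Order.TTheory GRing.Theory Num.Theory.
Local Open Scope ring_scope.

Section Opt.
Variable R : realFieldType.

Lemma maxopt_eq (T : finType) (P : pred T) (F : T -> R) v :
  (exists2 x, P x & F x = v) -> (forall x, P x -> F x <= v) -> maxopt P F = Some v.
Proof.
case=> x0 Px0 Fx0 ub; rewrite /maxopt; case: pickP => [x1 Px1|]; last by move/(_ x0); rewrite Px0.
congr Some; apply/eqP; rewrite eq_le; apply/andP; split.
  apply: (big_ind (fun y => y <= v)) => [|a b ha hb|x Px]; [exact: ub|by rewrite ge_max ha hb|exact: ub].
by rewrite (bigD1 x0) //= -Fx0 le_max lexx.
Qed.

Lemma maxopt_spec (T : finType) (P : pred T) (F : T -> R) :
  (exists x, P x) -> exists m, [/\ maxopt P F = Some m, (exists2 x, P x & F x = m) &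
     forall x, P x -> F x <= m].
Proof.
case=> x0 Px0; rewrite /maxopt; case: pickP => [x1 Px1|]; last by move/(_ x0); rewrite Px0.
eexists; split; first reflexivity.
  apply: (big_ind (fun y => exists2 x, P x & F x = y)) => [|a b [xa Pa <-] [xb Pb <-]|x Px].
  - by exists x1.
  - by case: (leP (F xa) (F xb)) => _; [exists xb|exists xa].
  - by exists x.
by move=> x Px; rewrite (bigD1 x) //= le_max lexx.
Qed.

Lemma maxopt_none (T : finType) (P : pred T) (F : T -> R) :
  (forall x, ~~ P x) -> maxopt P F = None.
Proof. by move=> h; rewrite /maxopt; case: pickP => // x; rewrite (negbTE (h x)). Qed.

Lemma minopt_eq (T : finType) (P : pred T) (F : T -> R) v :
  (exists2 x, P x & F x = v) -> (forall x, P x -> v <= F x) -> minopt P F = Some v.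
Proof.
case=> x0 Px0 Fx0 ub; rewrite /minopt; case: pickP => [x1 Px1|]; last by move/(_ x0); rewrite Px0.
congr Some; apply/eqP; rewrite eq_le; apply/andP; split; last first.
  apply: (big_ind (fun y => v <= y)) => [|a b ha hb|x Px]; [exact: ub|by rewrite le_min ha hb|exact: ub].
by rewrite (bigD1 x0) //= -Fx0 ge_min lexx.
Qed.

Lemma minopt_spec (T : finType) (P : pred T) (F : T -> R) :
  (exists x, P x) -> exists m, [/\ minopt P F = Some m, (exists2 x, P x & F x = m) &
     forall x, P x -> m <= F x].
Proof.
case=> x0 Px0; rewrite /minopt; case: pickP => [x1 Px1|]; last by move/(_ x0); rewrite Px0.
eexists; split; first reflexivity.
  apply: (big_ind (fun y => exists2 x, P x & F x = y)) => [|a b [xa Pa <-] [xb Pb <-]|x Px].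
  - by exists x1.
  - by case: (leP (F xa) (F xb)) => _; [exists xa|exists xb].
  - by exists x.
by move=> x Px; rewrite (bigD1 x) //= ge_min lexx.
Qed.
End Opt.

Lemma knap (R : realFieldType) (I : finType) (T : pred I) (w c : I -> R) th :
  (forall i, T i -> th <= c i /\ w i <= 2) -> (forall i, ~~ T i -> w i * (c i - th) <= 0) ->
  \sum_i w i = \sum_(i | T i) 2 -> \sum_i w i * c i <= \sum_(i | T i) 2 * c i.
Proof.
move=> hT hN hs.
have e1 : \sum_i w i * c i = \sum_i w i * (c i - th) + (\sum_i w i) * th.
  rewrite mulr_suml -big_split; apply: eq_bigr => i _ /=; by rewrite mulrBr subrK.
have e2 : \sum_(i | T i) 2 * c i = \sum_(i | T i) 2 * (c i - th) + (\sum_(i | T i) 2) * th.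
  rewrite mulr_suml -big_split; apply: eq_bigr => i _ /=; by rewrite mulrBr subrK.
rewrite e1 e2 hs lerD2r (bigID T) /= -[X in _ <= X]addr0.
apply: lerD; last by apply: sumr_le0 => i; apply: hN.
apply: ler_sum => i Ti; have [h1 h2] := hT i Ti.
by apply: ler_wpM2r => //; rewrite subr_ge0.
Qed.

Lemma sum_lt_const (R : realFieldType) N t (v : R) : (t <= N)%N ->
  \sum_(i < N | (i < t)%N) v = v * t%:R.
Proof. by move=> h; rewrite (big_ord_narrow (F := fun _ => v) h) sumr_const card_ord mulr_natr. Qed.

Lemma sum_lt_const_nat N t v : (t <= N)%N ->
  (\sum_(i < N | (i < t)%N) v = t * v)%N.
Proof. by move=> h; rewrite (big_ord_narrow (F := fun _ => v) h) sum_nat_const card_ord. Qed.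

Lemma sum_excl_const N t (p : 'I_N) v : (t <= N)%N -> (p < t)%N ->
  (\sum_(i < N | (i < t)%N && (i != p)) v = t.-1 * v)%N.
Proof.
move=> h hp; apply/eqP; rewrite -(eqn_add2l v) -[X in _ == X]mulSn prednK; last by case: t hp h.
by rewrite -(sum_lt_const_nat v h) [X in _ == X](bigD1 p).
Qed.

Section PartB.
Variables (R : realFieldType) (n : nat) (rev : 'I_n -> nat -> R).
Hypothesis hrev0 : forall j, rev j 0%N = 0.
Local Notation N := #|setB rev|.
Variable sigma : 'I_N -> 'I_n.
Hypothesis hinj : injective sigma.
Hypothesis hB : forall i, sigma i \in setB rev.
Hypothesis hsort : forall i i' : 'I_N, (i <= i')%N -> rev (sigma i') 2%N <= rev (sigma i) 2%N.

Local Notation c i := (rev (sigma i) 2%N).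
Local Notation al i := (rev (sigma i) 1%N).

Lemma hal i : 2 * al i <= c i.
Proof. by have := hB i; rewrite inE /aa /bb lerBrDr; lra. Qed.

Lemma eB : setB rev = sigma @: setT.
Proof.
apply/eqP; rewrite eq_sym eqEcard; apply/andP; split.
  by apply/subsetP => _ /imsetP [i _ ->]; exact: hB.
by rewrite card_imset // cardsT card_ord.
Qed.

Lemma reindexB (T : Type) (idx : T) (op : Monoid.com_law idx) (F : 'I_n -> T) :
  \big[op/idx]_(j in setB rev) F j = \big[op/idx]_(i < N) F (sigma i).
Proof.
have -> : \big[op/idx]_(j in setB rev) F j = \big[op/idx]_(j in sigma @: setT) F j.
  by apply: eq_bigl => j; rewrite -eB.
by rewrite big_imset /=; [apply: eq_bigl => i; rewrite inE | move=> ? ? _ _; apply: hinj].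
Qed.

Lemma gval_char k v :
  (exists2 y : 'I_N -> nat, (forall i, y i <= 2)%N /\ (\sum_i y i)%N = k &
      \sum_i rev (sigma i) (y i) = v) ->
  (forall y : 'I_N -> nat, (forall i, y i <= 2)%N -> (\sum_i y i)%N = k ->
      \sum_i rev (sigma i) (y i) <= v) ->
  gval rev k = Some v.
Proof.
move=> [y [yb ys] yv] ub; apply: maxopt_eq.
  pose x := [ffun j : 'I_n => (inord (odflt 0%N (omap y [pick i | sigma i == j])) : 'I_3)].
  have xE i : (x (sigma i) : nat) = y i.
    rewrite ffunE; case: pickP => [i' /eqP/hinj -> | /(_ i)]; last by rewrite eqxx.
    by rewrite /= inordK // ltnS yb.
  exists x; first by rewrite reindexB; apply/eqP; rewrite -ys; apply: eq_bigr => i _; rewrite xE.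
  by rewrite reindexB -yv; apply: eq_bigr => i _; rewrite xE.
move=> x /eqP; rewrite !reindexB => hx.
by apply: ub hx => i; rewrite -ltnS ltn_ord.
Qed.

Lemma theta_ex t : exists th, (forall i : 'I_N, (i < t)%N -> th <= c i) /\
                             (forall i : 'I_N, (t <= i)%N -> c i <= th).
Proof.
case: (boolP (0 < N)%N) => hN; last first.
  by exists 0; split => i; have h := leq_ltn_trans (leq0n i) (ltn_ord i); rewrite h in hN.
have hi0 : (minn t N.-1 < N)%N by lia.
exists (c (Ordinal hi0)); split => i hi; apply: hsort => /=.
  have := ltn_ord i; move: hi; set M := N; lia.
move: hi; set M := N; lia.
Qed.

Lemma term2 i (m : nat) : (m <= 2)%N -> 2 * rev (sigma i) m <= m%:R * c i.
Proof.
case: m => [|[|[|m]]] // _; first by rewrite hrev0 mulr0 mul0r.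
  by rewrite mul1r; apply: hal.

Qed.

Lemma ub_even t (y : 'I_N -> nat) : (forall i, y i <= 2)%N -> (\sum_i y i)%N = (2 * t)%N -> (t <= N)%N ->
  \sum_i rev (sigma i) (y i) <= \sum_(i < N | (i < t)%N) c i.
Proof.
move=> yb ys htN; have [th [h1 h2]] := theta_ex t.
have k := @knap R _ (fun i : 'I_N => (i < t)%N) (fun i => (y i)%:R) (fun i => c i) th.
have /k {k} : forall i : 'I_N, (i < t)%N -> th <= c i /\ (y i)%:R <= 2 :> R.
  by move=> i hi; split; [exact: h1| rewrite (ler_nat R (y i) 2)].
have /[swap]/[apply] : forall i : 'I_N, ~~ (i < t)%N -> (y i)%:R * (c i - th) <= 0.
  by move=> i; rewrite -leqNgt => hi; apply: mulr_ge0_le0; rewrite ?ler0n // subr_le0 h2.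
rewrite -natr_sum ys sum_lt_const // natrM => /(_ erefl) hk.
have h3 : 2 * \sum_i rev (sigma i) (y i) <= \sum_i (y i)%:R * c i.
  by rewrite mulr_sumr; apply: ler_sum => i _; apply: term2.
have h4 : \sum_(i < N | (i < t)%N) 2 * c i = 2 * \sum_(i < N | (i < t)%N) c i by rewrite mulr_sumr.
lra.
Qed.

Lemma ub_excl (y : 'I_N -> nat) p : (forall i, y i <= 2)%N -> y p = 1%N ->
  2 * \sum_i rev (sigma i) (y i) <= 2 * al p + \sum_i (if i == p then 0%N else y i)%:R * c i.
Proof.
move=> yb hp; rewrite mulr_sumr (bigD1 p) //= [X in _ <= _ + X](bigD1 p) //= eqxx mul0r add0r hp.
by apply: lerD => //; apply: ler_sum => i /negbTE ->; apply: term2.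
Qed.

Lemma sum_excl (y : 'I_N -> nat) p : y p = 1%N ->
  (\sum_i y i = 1 + \sum_i (if i == p then 0 else y i))%N.
Proof.
move=> hp; rewrite (bigD1 p) //= [in RHS](bigD1 p) //= eqxx hp add0n; congr (_ + _)%N.
by apply: eq_bigr => i /negbTE ->.
Qed.

Lemma ub_odd_hi t (y : 'I_N -> nat) p : (forall i, y i <= 2)%N -> (\sum_i y i)%N = (2 * t).+1 ->
  y p = 1%N -> (t < p)%N ->
  \sum_i rev (sigma i) (y i) <= \sum_(i < N | (i < t)%N) c i + al p.
Proof.
move=> yb ys hp hpt; have [th [h1 h2]] := theta_ex t.
have htN : (t <= N)%N by have := ltn_ord p; lia.
have k := @knap R _ (fun i : 'I_N => (i < t)%N) (fun i => (if i == p then 0 else y i)%:R) (fun i => c i) th.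
have /k {k} : forall i : 'I_N, (i < t)%N -> th <= c i /\ (if i == p then 0 else y i)%:R <= 2 :> R.
  move=> i hi; split; first exact: h1.
  by rewrite (ler_nat R _ 2); case: ifP.
have /[swap]/[apply] : forall i : 'I_N, ~~ (i < t)%N -> (if i == p then 0 else y i)%:R * (c i - th) <= 0.
  by move=> i; rewrite -leqNgt => hi; apply: mulr_ge0_le0; rewrite ?ler0n // subr_le0 h2.
rewrite -natr_sum sum_lt_const //.
have -> : (\sum_i (if i == p then 0 else y i) = 2 * t)%N by move: ys; rewrite (sum_excl hp); lia.
rewrite natrM => /(_ erefl) hk.
have h3 := ub_excl yb hp.
have h4 : \sum_(i < N | (i < t)%N) 2 * c i = 2 * \sum_(i < N | (i < t)%N) c i by rewrite mulr_sumr.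
lra.
Qed.

Lemma ub_odd_lo t (y : 'I_N -> nat) p : (forall i, y i <= 2)%N -> (\sum_i y i)%N = (2 * t).+1 ->
  y p = 1%N -> (p < t.+1)%N -> (t < N)%N ->
  \sum_i rev (sigma i) (y i) <= \sum_(i < N | (i < t.+1)%N) c i - (c p - al p).
Proof.
move=> yb ys hp hpt htN; have [th [h1 h2]] := theta_ex t.+1.
pose T := fun i : 'I_N => (i < t.+1)%N && (i != p).
have k := @knap R _ T (fun i => (if i == p then 0 else y i)%:R) (fun i => c i) th.
have /k {k} : forall i : 'I_N, T i -> th <= c i /\ (if i == p then 0 else y i)%:R <= 2 :> R.
  move=> i /andP[hi _]; split; first exact: h1.
  by rewrite (ler_nat R _ 2); case: ifP.
have /[swap]/[apply] : forall i : 'I_N, ~~ T i -> (if i == p then 0 else y i)%:R * (c i - th) <= 0.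
  move=> i; rewrite /T negb_and negbK -leqNgt; case: eqP => [->|_]; first by rewrite mul0r.
  by rewrite orbF => hi; apply: mulr_ge0_le0; rewrite ?ler0n // subr_le0 h2.
have eT (F : 'I_N -> R) : \sum_(i < N | (i < t.+1)%N) F i = F p + \sum_(i | T i) F i.
  by rewrite (bigD1 p).
have := eT (fun _ => 2); rewrite sum_lt_const // => e2.
have -> : \sum_(i | T i) (2 : R) = (2 * t)%:R by rewrite natrM; move: e2; rewrite mulrSr; lra.
rewrite -natr_sum.
have -> : (\sum_i (if i == p then 0 else y i) = 2 * t)%N by move: ys; rewrite (sum_excl hp); lia.
move=> /(_ erefl) hk.
have h3 := ub_excl yb hp.
have h4 : \sum_(i | T i) 2 * c i = 2 * \sum_(i | T i) c i by rewrite mulr_sumr.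
have := eT (fun i => c i) => /= h5.
lra.
Qed.

Lemma gval_even t : (t <= N)%N -> gval rev (2 * t) = Some (\sum_(i < N | (i < t)%N) c i).
Proof.
move=> htN; apply: gval_char; last by move=> y yb ys; apply: ub_even.
exists (fun i : 'I_N => if (i < t)%N then 2%N else 0%N).
  split; first by move=> i; case: ifP.
  by rewrite -big_mkcond /= sum_lt_const_nat // mulnC.
rewrite [RHS]big_mkcond; apply: eq_bigr => i _; case: ifP => //; by rewrite hrev0.
Qed.

Definition wit (S : pred 'I_N) p (i : 'I_N) : nat :=
  if i == p then 1%N else if S i then 2%N else 0%N.

Lemma wit_b S p i : (wit S p i <= 2)%N.
Proof. by rewrite /wit; case: ifP => //; case: ifP. Qed.

Lemma wit_sum S p : ~~ S p -> (\sum_i wit S p i = 1 + \sum_(i | S i) 2)%N.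
Proof.
move=> hSp; rewrite (bigD1 p) //= /wit eqxx; congr (_ + _)%N.
rewrite [RHS]big_mkcond [RHS](bigD1 p) //= (negbTE hSp) add0n.
by apply: eq_bigr => i /negbTE ->.
Qed.

Lemma wit_val S p : ~~ S p -> \sum_i rev (sigma i) (wit S p i) = al p + \sum_(i | S i) c i.
Proof.
move=> hSp; rewrite (bigD1 p) //= /wit eqxx; congr (_ + _).
rewrite [RHS]big_mkcond [RHS](bigD1 p) //= (negbTE hSp) add0r.
by apply: eq_bigr => i /negbTE ->; case: ifP => //; rewrite hrev0.
Qed.

Lemma exists_one (y : 'I_N -> nat) : (forall i, y i <= 2)%N -> odd (\sum_i y i) -> exists p, y p = 1%N.
Proof.
move=> yb; case: (pickP (fun i => y i == 1%N)) => [p /eqP|h]; first by exists p.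
have e i : y i = (2 * (y i)./2)%N.
  by have := yb i; have := h i; case: (y i) => [|[|[|m]]].
by rewrite (eq_bigr (fun i => 2 * (y i)./2)%N) // -big_distrr /= oddM.
Qed.

Lemma gval_odd t : (t < N)%N ->
  exists gm gp mb,
    [/\ gval rev (2 * t) = Some gm, gval rev (2 * t.+1) = Some gp,
       minopt (fun i : 'I_N => (i < t.+1)%N) (fun i => bb rev (sigma i)) = Some mb &
       gval rev (2 * t).+1 = Some
         (match maxopt (fun i : 'I_N => (t.+1 <= i)%N) (fun i => aa rev (sigma i)) with
          | Some ma => Num.max (gm + ma) (gp - mb)
          | None => gp - mb
          end)].
Proof.
move=> htN.
exists (\sum_(i < N | (i < t)%N) c i), (\sum_(i < N | (i < t.+1)%N) c i).
have [mb [hmb [pmb hpmb hbmb] mbl]] :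
   exists m, [/\ minopt (fun i : 'I_N => (i < t.+1)%N) (fun i => bb rev (sigma i)) = Some m,
     (exists2 x : 'I_N, (x < t.+1)%N & bb rev (sigma x) = m) &
     forall x : 'I_N, (x < t.+1)%N -> m <= bb rev (sigma x)].
  apply: minopt_spec.
  have h0 : (0 < N)%N by lia.
  by exists (Ordinal h0).
exists mb; split; [exact: gval_even (ltnW htN) | exact: gval_even htN | exact: hmb |].
pose T := fun i : 'I_N => (i < t.+1)%N && (i != pmb).
have W2s : (\sum_i wit T pmb i)%N = (2 * t).+1.
  rewrite wit_sum; last by rewrite /T eqxx andbF.
  have -> : (\sum_(i | T i) 2 = \sum_(i : 'I_N | (i < t.+1)%N && (i != pmb)) 2)%N by [].
  rewrite (sum_excl_const 2 htN hpmb) mulnC //.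
have W2v : \sum_i rev (sigma i) (wit T pmb i) = \sum_(i < N | (i < t.+1)%N) c i - mb.
  rewrite wit_val /T ?eqxx ?andbF // [in RHS](bigD1 pmb) //= -hbmb /bb; lra.
have W2 : exists2 y : 'I_N -> nat, (forall i, y i <= 2)%N /\ (\sum_i y i)%N = (2 * t).+1 &
      \sum_i rev (sigma i) (y i) = \sum_(i < N | (i < t.+1)%N) c i - mb.
  by exists (wit T pmb) => //; split => // i; apply: wit_b.
have ubs (y : 'I_N -> nat) : (forall i, y i <= 2)%N -> (\sum_i y i)%N = (2 * t).+1 ->
   (exists2 p : 'I_N, (t < p)%N & \sum_i rev (sigma i) (y i) <= \sum_(i < N | (i < t)%N) c i + aa rev (sigma p))
   \/ \sum_i rev (sigma i) (y i) <= \sum_(i < N | (i < t.+1)%N) c i - mb.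
  move=> yb ys; have [p hp] : exists p, y p = 1%N by apply: exists_one yb _; rewrite ys /= oddM.
  case: (ltnP t p) => hpt.
    by left; exists p => //; apply: (ub_odd_hi yb ys hp hpt).
  right; apply: (le_trans (ub_odd_lo yb ys hp _ htN)) => //.
  by have := mbl p hpt; rewrite /bb; lra.
case: (boolP [exists i : 'I_N, (t.+1 <= i)%N]) => [/existsP ex|nex].
  have [ma [-> [pma hpma hama] mal]] := maxopt_spec (fun i => aa rev (sigma i)) ex.
  apply: gval_char; last first.
    move=> y yb ys; case: (ubs y yb ys) => [[p hp hle]|hle]; rewrite le_max; apply/orP; [left|right] => //.
    by apply: (le_trans hle); rewrite lerD2l; apply: mal.
  case: (leP (\sum_(i < N | (i < t.+1)%N) c i - mb) (\sum_(i < N | (i < t)%N) c i + ma)) => hm.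
    idtac.
    exists (wit (fun i : 'I_N => (i < t)%N) pma); first split; first by move=> i; apply: wit_b.
      rewrite wit_sum /=; last by rewrite -leqNgt ltnW.
      by rewrite sum_lt_const_nat 1?ltnW // addnC addn1 mulnC.
    rewrite wit_val /=; last by rewrite -leqNgt ltnW.
    by rewrite -hama /aa addrC.
  exact: W2.
have -> : maxopt (fun i : 'I_N => (t.+1 <= i)%N) (fun i => aa rev (sigma i)) = None.
  by apply: maxopt_none => i; apply: contra nex => h; apply/existsP; exists i.
apply: gval_char => // y yb ys; case: (ubs y yb ys) => [[p hp hle]|//].
by move/negP: nex; case; apply/existsP; exists p.
Qed.
End PartB.

Lemma mm0 (R : realFieldType) (a b : R) : 0 <= Num.max a 0 + Num.max b 0.
Proof. by case: (leP a 0); case: (leP b 0) => hb ha; lra. Qed.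
Lemma mm1 (R : realFieldType) (a b : R) : a <= Num.max a 0 + Num.max b 0.
Proof. by case: (leP a 0); case: (leP b 0) => hb ha; lra. Qed.
Lemma mm2 (R : realFieldType) (a b : R) : a + b <= Num.max a 0 + Num.max b 0.
Proof. by case: (leP a 0); case: (leP b 0) => hb ha; lra. Qed.

Section PartA.
Variables (R : realFieldType) (n : nat) (rev : 'I_n -> nat -> R).
Hypothesis hrev0 : forall j, rev j 0%N = 0.
Local Notation A := (setA rev).
Local Notation L := ([seq aa rev j | j in setA rev] ++ [seq bb rev j | j in setA rev]).
Local Notation S := (sort (>=%R) L).

Lemma sizeS : size S = (2 * #|A|)%N.
Proof. by rewrite size_sort size_cat !size_image mul2n addnn. Qed.

Lemma sortedS : sorted (>=%R) S.
Proof. by apply: sort_sorted => x y; apply: le_total. Qed.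

Lemma sumL (F : R -> R) : \sum_(l <- L) F l = \sum_(j in A) (F (aa rev j) + F (bb rev j)).
Proof. by rewrite big_cat /= /image_mem !big_map !big_enum -big_split. Qed.

Lemma ubA k (x : {ffun 'I_n -> 'I_3}) : (k <= 2 * #|A|)%N ->
  (\sum_(j in A) (x j : nat))%N = k -> \sum_(j in A) rev j (x j) <= topk_sum rev k.
Proof.
move=> hk hx.
pose th := nth 0 S k.-1.
pose phi := fun l : R => Num.max (l - th) 0.
have s1 : \sum_(j in A) rev j (x j) - th * k%:R <= \sum_(l <- L) phi l.
  rewrite sumL -hx natr_sum mulr_sumr -sumrB; apply: ler_sum => j _.
  rewrite /phi /aa /bb; have := ltn_ord (x j); case: (nat_of_ord (x j)) => [|[|[|m]]] // _.
  - by rewrite hrev0 mulr0 subr0; apply: mm0.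
  - by rewrite mulr1; apply: mm1.
  - rewrite (_ : rev j 2%N - th * 2%:R = (rev j 1%N - th) + (rev j 2%N - rev j 1%N - th)); last ring.
    by apply: mm2.
have s2 : \sum_(l <- L) phi l = \sum_(l <- S) phi l.
  by apply: perm_big; rewrite perm_sym; apply: permEl; apply: perm_sort.
have hsz : (k <= size S)%N by rewrite sizeS.
have hrefl : reflexive (>=%R : rel R) by move=> y; apply: lexx.
have htr : transitive (>=%R : rel R) by move=> y z w h1 h2; apply: le_trans h2 h1.
have hle := sorted_leq_nth htr hrefl 0 sortedS.
have htake : forall l, l \in take k S -> th <= l.
  move=> l hl; have hi : (index l (take k S) < k)%N.
    by rewrite -[X in (_ < X)%N](size_takel hsz) index_mem.
  rewrite -(nth_index 0 hl) nth_take //; apply: hle; rewrite ?inE; move: hi hsz; set m := index _ _; set z := size _; lia.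
have hdrop : forall l, l \in drop k S -> l <= th.
  move=> l hl; have hi : (index l (drop k S) < size S - k)%N by rewrite -size_drop index_mem.
  rewrite -(nth_index 0 hl) nth_drop; apply: hle; rewrite ?inE; move: hi hsz; set m := index _ _; set z := size _; lia.
have s3 : \sum_(l <- S) phi l = \sum_(l <- take k S) (l - th).
  rewrite -{1}(cat_take_drop k S) big_cat /= [X in _ + X]big1_seq ?addr0.
    by apply: eq_big_seq => l hl; rewrite /phi max_l // subr_ge0 htake.
  by move=> l /andP[_ hl]; rewrite /phi max_r // subr_le0 hdrop.
have s4 : \sum_(l <- take k S) (l - th) = topk_sum rev k - th * k%:R.
  rewrite sumrB /topk_sum; congr (_ - _).
  by rewrite (big_nth 0) sumr_const_nat subn0 size_takel // mulr_natr.
lra.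
Qed.

Definition vv (u : 'I_n * bool) : R := if u.2 then aa rev u.1 else bb rev u.1.
Definition rel_v : rel ('I_n * bool) := fun u w => vv w <= vv u.
Local Notation I := ([seq (j, true) | j in setA rev] ++ [seq (j, false) | j in setA rev]).
Local Notation SI := (sort rel_v I).

Lemma mapI : map vv I = L.
Proof. by rewrite map_cat /image_mem -!map_comp. Qed.

Lemma mapSI : map vv SI = S.
Proof. by rewrite -mapI; apply: map_sort. Qed.

Lemma uniqI : uniq I.
Proof.
rewrite cat_uniq !map_inj_uniq ?enum_uniq //= ?andbT; try by move=> ? ? [].
by apply/hasP => -[u /mapP [j _ ->] /mapP [j' _ []]].
Qed.

Lemma memI u : (u \in I) = (u.1 \in A).
Proof.
case: u => j b; rewrite mem_cat /image_mem.
apply/idP/idP => [/orP[]/mapP[j' hj' [-> _]]|hj]; try by rewrite mem_enum in hj'.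
by move: hj; case: b => hj; [apply/orP; left | apply/orP; right]; apply/mapP; exists j; rewrite ?mem_enum.
Qed.

Lemma sortedSI : sorted rel_v SI.
Proof. by apply: sort_sorted => u w; apply: le_total. Qed.

Lemma closure k j : (j, false) \in take k SI -> (j, true) \in take k SI.
Proof.
move=> hf; have hfS : (j, false) \in SI := mem_take hf.
have hj : j \in A by move: hfS; rewrite mem_sort memI.
have htS : (j, true) \in SI by rewrite mem_sort memI.
rewrite in_take // in hf *; rewrite in_take //; apply: leq_ltn_trans hf; rewrite leqNgt; apply/negP => hlt.
have hrefl : reflexive rel_v by move=> y; apply: lexx.
have htr : transitive rel_v by move=> y z w h1 h2; rewrite /rel_v; apply: le_trans h2 h1.
have := sorted_leq_nth htr hrefl (j, true) sortedSI.
move/(_ (index (j, false) SI) (index (j, true) SI)).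
rewrite !inE !index_mem hfS htS ltnW // => /(_ erefl erefl erefl).
rewrite !nth_index // /rel_v /vv /=.
by move: hj; rewrite inE => hj; rewrite leNgt hj.
Qed.

Lemma decomp (X : seq ('I_n * bool)) (F : 'I_n * bool -> R) : uniq X ->
  (forall u, u \in X -> u.1 \in A) ->
  \sum_(u <- X) F u = \sum_(j in A) ((((j, true) \in X) : nat)%:R * F (j, true) +
                                     (((j, false) \in X) : nat)%:R * F (j, false)).
Proof.
move=> uX hX; rewrite big_uniq // big_mkcond /=.
transitivity (\sum_(j : 'I_n) \sum_(b : bool) (if (j, b) \in X then F (j, b) else 0)).
  by rewrite pair_bigA; apply: eq_bigr; case.
rewrite /= [RHS]big_mkcond /=; apply: eq_bigr => j _; rewrite big_bool /=.
case: (boolP (j \in A)) => hj.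
  by case: ((j, true) \in X); case: ((j, false) \in X); rewrite /= ?mul1r ?mul0r ?addr0 ?add0r.
have hn b : ((j, b) \in X) = false by apply/negP => /hX /=; rewrite (negbTE hj).
by rewrite !hn addr0.
Qed.

Lemma fvalA k : (k <= 2 * #|A|)%N -> fval rev k = Some (topk_sum rev k).
Proof.
move=> hk; apply: maxopt_eq; last by move=> x /eqP hx; apply: ubA.
pose X := take k SI.
have uX : uniq X by rewrite take_uniq // sort_uniq uniqI.
have hX : forall u, u \in X -> u.1 \in A by move=> u /mem_take; rewrite mem_sort memI.
have hSI : size SI = size S by rewrite size_sort -(size_map vv I) mapI size_sort.
have hsz : size X = k by rewrite size_takel // hSI sizeS.
pose x := [ffun j => (inord (((j, true) \in X) + ((j, false) \in X)) : 'I_3)].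
have xE j : (x j : nat) = (((j, true) \in X) + ((j, false) \in X))%N.
  by rewrite ffunE inordK //; case: ((j, true) \in X); case: ((j, false) \in X).
exists x.
  rewrite -(eqr_nat R) natr_sum -hsz -sum1_size natr_sum (decomp (fun _ => (1%N)%:R) uX hX).
  by apply/eqP; apply: eq_bigr => j _; rewrite xE natrD !mulr1.
rewrite /topk_sum -mapSI -map_take big_map (decomp vv uX hX); apply: eq_bigr => j hj.
rewrite xE /vv /=.
have := @closure k j; rewrite -/X.
case: ((j, true) \in X); case: ((j, false) \in X) => /= h; rewrite ?mul1r ?mul0r ?addr0 ?add0r.
- by rewrite /aa /bb (_ : (1 + 1)%N = 2%N) //; ring.
- by [].
- by have := h isT.
- by rewrite hrev0.
Qed.
End PartA.

Unset Implicit Arguments.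
Set Strict Implicit.

Theorem lemma7 (R : realFieldType) (n : nat) (rev : 'I_n -> nat -> R)
  (hrev0 : forall j, rev j 0%N = 0)
  (sigma : 'I_#|setB rev| -> 'I_n)
  (hinj : injective sigma)
  (hB : forall i, sigma i \in setB rev)
  (hsort : forall i i' : 'I_#|setB rev|, (i <= i')%N -> rev (sigma i') 2%N <= rev (sigma i) 2%N) :
  (forall k, (k <= 2 * #|setA rev|)%N -> fval rev k = Some (topk_sum rev k)) /\
  (forall k, (k <= 2 * #|setB rev|)%N ->
     if ~~ odd k then
       gval rev k = Some (\sum_(i < #|setB rev| | (i < k./2)%N) rev (sigma i) 2%N)
     else
       exists gm gp mb,
         [/\ gval rev k.-1 = Some gm, gval rev k.+1 = Some gp,
             minopt (fun i : 'I_#|setB rev| => (i < k.+1./2)%N) (fun i => bb rev (sigma i)) = Some mb &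
             gval rev k = Some
               (match maxopt (fun i : 'I_#|setB rev| => (k.+1./2 <= i)%N)
                             (fun i => aa rev (sigma i)) with
                | Some ma => Num.max (gm + ma) (gp - mb)
                | None => gp - mb
                end)]).
Proof.
split; first by move=> k hk; apply: fvalA.
move=> k hk; set t := k./2.
have hodk := odd_double_half k; rewrite -/t in hodk.
case: ifP => ho.
  have e : k = (2 * t)%N by rewrite -hodk (negbTE ho) add0n mul2n.
  rewrite [in gval _ _]e; apply: (gval_even hrev0 hinj hB hsort).
  by move: hk; rewrite e; lia.
have e : k = (2 * t).+1 by rewrite -hodk (negbFE ho) add1n mul2n.
have e2 : k.+1 = (2 * t.+1)%N by rewrite e; lia.
have e3 : k.+1./2 = t.+1 by rewrite e2 mul2n doubleK.
have e1 : k.-1 = (2 * t)%N by rewrite e.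
rewrite e3 e2 e1 [in gval _ k]e.
apply: (gval_odd hrev0 hinj hB hsort).
by move: hk; rewrite e; lia.
Qed.
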